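(* Let $X$, $Y_k$ ($k\in\mathbb N$) and norms $\|\cdot\|_{X\oplus Y_k}$ be as in the generalized $\ell^2$-sum setting. Let $P_X:X\to X$ and $P_{Y_k}:Y_k\to Y_k$ ($k\in\mathbb N$) be projections such that the operator $P_X+P_{Y_k}:x+y_k\mapsto P_Xx+P_{Y_k}y_k$ satisfies $\|P_X+P_{Y_k}\|_{X\oplus Y_k}\le1$ for every $k$. (A) The projection $P:x+\sum_k y_k\mapsto P_Xx+\sum_kP_{Y_k}y_k$ on $\Sigma(X\oplus Y_k)$ satisfies $\|P\|_\Sigma\le1$. (B) For every $z\in\Sigma(P_XX\oplus P_{Y_k}Y_k)$ we have $\|z\|_{\Sigma(P_XX\oplus P_{Y_k}Y_k)}=\|z\|_{\Sigma(X\oplus Y_k)}$, where $\Sigma(P_XX\oplus P_{Y_k}Y_k)$ is formed from the spaces $P_XX$, $P_{Y_k}Y_k$ with the restricted norms and the restrictions of $\|\cdot\|_{X\oplus Y_k}$ to $P_XX\oplus P_{Y_k}Y_k$.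
   Context: Setting: $(X,\|\cdot\|_X)$ and $(Y_k,\|\cdot\|_{Y_k})$, $k\in\mathbb N$, are Banach spaces; for each $k$, $\|\cdot\|_{X\oplus Y_k}$ is a norm on $X\oplus Y_k$ coinciding with $\|\cdot\|_X$ on $X$ and with $\|\cdot\|_{Y_k}$ on $Y_k$, and monotone: $\|x+y_k\|_{X\oplus Y_k}\ge\|x\|_X$. Duals of direct sums are identified with direct sums of duals via $(x^*+y^* )(x+y)=x^*(x)+y^*(y)$. $\Lambda(X\oplus Y_k)$ is the set of functionals $x^*+\sum_k\alpha_ky_k^*$ with $x^*\in X^*$, $y_k^*\in Y_k^*$, $\|x^*+y_k^*\|_{X\oplus Y_k}\le1$ for all $k$, $0\le\alpha_k\le1$, $\sum\alpha_k^2\le1$. $\Sigma(X\oplus Y_k)=\{x+y_1+y_2+\dots:x\in X,y_k\in Y_k,\sum\|y_k\|_{Y_k}^2<\infty\}$ with $\|z\|_\Sigma=\|z\|_{\Sigma(X\oplus Y_k)}=\sup\{|z^*(z)|:z^*\in\Lambda(X\oplus Y_k)\}$. *)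

(* Defs.v *)
From HB Require Import structures.
From mathcomp Require Import all_boot all_order all_algebra.
From mathcomp Require Import all_classical all_reals all_analysis.
Set Implicit Arguments. Unset Strict Implicit. Unset Printing Implicit Defensive.
Import Order.TTheory GRing.Theory Num.Theory.
Import numFieldNormedType.Exports.
Local Open Scope classical_set_scope.
Local Open Scope ring_scope.

Section Defs.
Variable R : realType.

(* n is a norm on the (algebraic) direct sum X (+) Y, presented as a function
   of the two components. *)
Definition is_sum_norm (X Y : normedModType R) (n : X -> Y -> R) : Prop :=
  [/\ (forall x y, 0 <= n x y),
      (forall x y, n x y = 0 -> x = 0 /\ y = 0),
      (forall (a : R) x y, n (a *: x) (a *: y) = `|a| * n x y) &
      (forall x1 y1 x2 y2, n (x1 + x2) (y1 + y2) <= n x1 y1 + n x2 y2)].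

Definition gen_l2_setting (X : normedModType R) (Y : nat -> normedModType R)
  (N : forall k, X -> Y k -> R) : Prop :=
  forall k, [/\ is_sum_norm (N k),
     (forall x, N k x 0 = `|x|),
     (forall y, N k 0 y = `|y|) &
     (forall x y, `|x| <= N k x y)].

Definition linear_on (X : normedModType R) (V : set X) (f : X -> R) : Prop :=
  forall (a : R) x y, V x -> V y -> f (a *: x + y) = a * f x + f y.

Definition sq_summable (Y : nat -> normedModType R) (y : forall k, Y k) : Prop :=
  (\sum_(0 <= k <oo) ((`|y k| ^+ 2)%:E) < +oo)%E.

(* Lambda(V (+) W_k): functionals x^* + sum_k alpha_k y_k^* where x^* is a
   linear functional on the subspace V of X, y_k^* a linear functional on the
   subspace W_k of Y_k, with dual norm ||x^* + y_k^*||_{V (+) W_k} <= 1 for all k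
   (dual norm taken w.r.t. the restriction of N k to V (+) W_k), 0 <= alpha_k <= 1
   and sum alpha_k^2 <= 1.  For V = setT, W_k = setT this is Lambda(X (+) Y_k). *)
Definition Lambda (X : normedModType R) (Y : nat -> normedModType R)
  (N : forall k, X -> Y k -> R) (V : set X) (W : forall k, set (Y k))
  (xs : X -> R) (ys : forall k, Y k -> R) (alpha : nat -> R) : Prop :=
  [/\ linear_on V xs,
      (forall k, linear_on (W k) (ys k)),
      (forall k x y, V x -> W k y -> N k x y <= 1 -> `|xs x + ys k y| <= 1),
      (forall k, 0 <= alpha k <= 1) &
      (\sum_(0 <= k <oo) ((alpha k ^+ 2)%:E) <= 1)%E].

(* value of x^* + sum_k alpha_k y_k^* at z = x + y_1 + y_2 + ... *)
Definition Lambda_eval (X : normedModType R) (Y : nat -> normedModType R)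
  (xs : X -> R) (ys : forall k, Y k -> R) (alpha : nat -> R)
  (x : X) (y : forall k, Y k) : R :=
  xs x + limn (series (fun k => alpha k * ys k (y k))).

Definition sigma_norm (X : normedModType R) (Y : nat -> normedModType R)
  (N : forall k, X -> Y k -> R) (V : set X) (W : forall k, set (Y k))
  (x : X) (y : forall k, Y k) : R :=
  sup [set r : R | exists xs ys alpha, Lambda N V W xs ys alpha /\
                     r = `|Lambda_eval xs ys alpha x y| ].

End Defs.

(* Main.v *)
Require Import Defs.
From HB Require Import structures.
From mathcomp Require Import all_boot all_order all_algebra.
From mathcomp Require Import all_classical all_reals all_analysis.
From mathcomp Require Import lra.
Import Order.TTheory GRing.Theory Num.Theory.
Import numFieldNormedType.Exports.
Local Open Scope classical_set_scope.
Local Open Scope ring_scope.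

Lemma lin0 (R : realType) (X : normedModType R) (f : X -> R) :
  linear_on setT f -> f 0 = 0.
Proof.
move=> h; have := h 1 0 0 I I; rewrite scale1r addr0 mul1r => e; lra.
Qed.

Lemma linZ (R : realType) (X : normedModType R) (f : X -> R) a x :
  linear_on setT f -> f (a *: x) = a * f x.
Proof.
move=> h; have := h a x 0 I I; by rewrite addr0 (@lin0 _ _ _ h) addr0.
Qed.

Lemma dual_bound (R : realType) (X : normedModType R) (f : X -> R) :
  linear_on setT f -> (forall x, `|x| <= 1 -> `|f x| <= 1) ->
  forall x, `|f x| <= `|x|.
Proof.
move=> hl hb x.
have [x0|xn0] := eqVneq x 0; first by rewrite x0 (@lin0 _ _ _ hl) normr0.
have nx : 0 < `|x| by rewrite normr_gt0.
have := hb (`|x|^-1 *: x); rewrite normrZ normrV ?unitfE ?gt_eqF // normr_id.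
rewrite mulVf ?gt_eqF // lexx => /(_ isT).
rewrite (@linZ _ _ _ _ _ hl) normrM normrV ?unitfE ?gt_eqF // normr_id.
by rewrite ler_pdivrMl // mulr1.
Qed.
Lemma ps_le (R : realType) (a : nat -> R) (M : R) : (forall k, 0 <= a k) ->
  (\sum_(0 <= k <oo) (a k)%:E <= M%:E)%E -> forall n, \sum_(0 <= k < n) a k <= M.
Proof.
move=> a0 hM n.
have := @nneseries_lim_ge R (fun k => (a k)%:E) xpredT 0 n.
rewrite sumEFin => /(_ (fun k _ _ => a0 k)) h.
by rewrite -lee_fin (le_trans h hM).
Qed.

Lemma ps_fin (R : realType) (a : nat -> R) : (forall k, 0 <= a k) ->
  (\sum_(0 <= k <oo) (a k)%:E < +oo)%E -> exists M, forall n, \sum_(0 <= k < n) a k <= M.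
Proof.
move=> a0 hS; exists (fine (\sum_(0 <= k <oo) (a k)%:E)); apply: ps_le => //.
have h0 : (0 <= \sum_(0 <= k <oo) (a k)%:E)%E.
  by apply: nneseries_ge0 => k _ _; rewrite lee_fin.
rewrite fineK //; rewrite ge0_fin_numE //.
Qed.

Lemma series_bound (R : realType) (u a b : nat -> R) (A B : R) :
  (forall k, `|u k| <= (a k ^+ 2 + b k ^+ 2) / 2) ->
  (forall n, \sum_(0 <= k < n) a k ^+ 2 <= A) ->
  (forall n, \sum_(0 <= k < n) b k ^+ 2 <= B) ->
  cvgn (series u) /\ `|limn (series u)| <= (A + B) / 2.
Proof.
move=> hu hA hB.
have bnd : forall n, [normed series u] n <= (A + B) / 2.
  move=> n; rewrite /series /=.
  apply: (le_trans (ler_sum _ (fun k _ => hu k))).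
  rewrite -mulr_suml big_split /= ler_pM2r ?invr_gt0 ?ltr0n //.
  exact: lerD.
have cn : cvgn [normed series u].
  apply: nondecreasing_is_cvgn.
    by apply: nondecreasing_series => k _ _; exact: normr_ge0.
  by exists ((A + B) / 2) => _ [n _ <-].
split; first exact: normed_cvg.
apply: (le_trans (lim_series_norm cn)).
apply: limr_le => //; exact: nearW.
Qed.

Section Main.
Variables (R : realType) (X : normedModType R) (Y : nat -> normedModType R)
  (N : forall k, X -> Y k -> R).
Hypothesis hN : gen_l2_setting N.

Lemma xs_bound xs ys alpha : Lambda N setT (fun _ => setT) xs ys alpha ->
  forall x, `|xs x| <= `|x|.
Proof.
case=> lx ly hb _ _; apply: dual_bound => // x hx.
have [_ h0 _ _] := hN 0.
have := hb 0%N x 0 I I; rewrite h0 (@lin0 _ _ _ (ly 0%N)) addr0; exact.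
Qed.

Lemma ys_bound xs ys alpha : Lambda N setT (fun _ => setT) xs ys alpha ->
  forall k v, `|ys k v| <= `|v|.
Proof.
case=> lx ly hb _ _ k; apply: dual_bound => // v hv.
have [_ _ h0 _] := hN k.
have := hb k 0 v I I; rewrite h0 (@lin0 _ _ _ lx) add0r; exact.
Qed.

Lemma eval_bound xs ys alpha (M : R) x (y : forall k, Y k) :
  Lambda N setT (fun _ => setT) xs ys alpha ->
  (forall n, \sum_(0 <= k < n) `|y k| ^+ 2 <= M) ->
  `|Lambda_eval xs ys alpha x y| <= `|x| + (1 + M) / 2.
Proof.
move=> hL hM.
have bx := xs_bound _ _ _ hL x.
have by_ := ys_bound _ _ _ hL.
have [_ _ _ ha hs] := hL.
have hu : forall k, `|alpha k * ys k (y k)| <= (alpha k ^+ 2 + `|y k| ^+ 2) / 2.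
  move=> k; have := by_ k (y k); have /andP[a0 a1] := ha k.
  rewrite normrM (ger0_norm a0) => hb.
  have hy0 : 0 <= `|ys k (y k)| by [].
  have : alpha k * `|ys k (y k)| <= alpha k * `|y k| by rewrite ler_wpM2l.
  have := sqr_ge0 (alpha k - `|y k|); rewrite sqrrB => ? ?; lra.
have hA : forall n, \sum_(0 <= k < n) alpha k ^+ 2 <= 1.
  apply: ps_le => //; move=> k; exact: sqr_ge0.
have [_ hl] := @series_bound R (fun k => alpha k * ys k (y k)) alpha
   (fun k => `|y k|) 1 M hu hA hM.
rewrite /Lambda_eval; apply: (le_trans (ler_normD _ _)); exact: lerD.
Qed.

Lemma zeroL V W : Lambda N V W (fun _ => 0) (fun _ _ => 0) (fun _ => 0).
Proof.
split.
- by move=> a u v _ _; rewrite mulr0 addr0.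
- by move=> k a u v _ _; rewrite mulr0 addr0.
- by move=> k u v _ _ _; rewrite addr0 normr0.
- by move=> k; rewrite lexx ler01.
- rewrite eseries0 ?lee01 // => i _ _; by rewrite expr0n.
Qed.

Lemma sigma_has_sup x (y : forall k, Y k) : sq_summable y ->
  has_sup [set r : R | exists xs ys alpha, Lambda N setT (fun _ => setT) xs ys alpha /\
                     r = `|Lambda_eval xs ys alpha x y| ].
Proof.
move=> hy; have [M hM] := @ps_fin R (fun k => `|y k| ^+ 2) (fun k => sqr_ge0 _) hy.
split.
  by exists `|Lambda_eval (fun _ => 0) (fun _ _ => 0) (fun _ => 0) x y|;
     exists (fun _ => 0), (fun _ _ => 0), (fun _ => 0); split => //; exact: zeroL.
exists (`|x| + (1 + M) / 2) => _ [xs [ys [alpha [hL ->]]]].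
exact: (eval_bound _ _ _ _ _ _ hL hM).
Qed.

End Main.

Theorem lemma2p3 (R : realType) (X : completeNormedModType R)
  (Y : nat -> completeNormedModType R)
  (N : forall k, X -> Y k -> R)
  (PX : {linear X -> X}) (PY : forall k, {linear Y k -> Y k}) :
  gen_l2_setting N ->
  (forall x, PX (PX x) = PX x) ->
  (forall k y, PY k (PY k y) = PY k y) ->
  (forall k x y, N k (PX x) (PY k y) <= N k x y) ->
  (* (A) *)
  (forall (x : X) (y : forall k, Y k), sq_summable y ->
     sq_summable (fun k => PY k (y k)) /\
     sigma_norm N setT (fun _ => setT) (PX x) (fun k => PY k (y k))
       <= sigma_norm N setT (fun _ => setT) x y)
  /\
  (* (B) *)
  (forall (x : X) (y : forall k, Y k),
     range PX x -> (forall k, range (PY k) (y k)) -> sq_summable y ->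
     sigma_norm N (range PX) (fun k => range (PY k)) x y
       = sigma_norm N setT (fun _ => setT) x y).
Proof.
move=> hN PXi PYi hP.
have comp : forall V W xs ys alpha,
    (forall x, V (PX x)) -> (forall k y, W k (PY k y)) ->
    Lambda N V W xs ys alpha ->
    Lambda N setT (fun _ => setT) (fun x => xs (PX x)) (fun k y => ys k (PY k y)) alpha.
  move=> V W xs ys alpha hV hW [lx ly hb ha hs]; split => //.
  - by move=> a u v _ _; rewrite linearP /= lx.
  - by move=> k a u v _ _; rewrite linearP /= ly.
  - move=> k u v _ _ huv; apply: hb => //; exact: le_trans (hP _ _ _) huv.
split.
  move=> x y hy.
  have sqPY : sq_summable (fun k => PY k (y k)).
    apply: le_lt_trans hy; apply: lee_nneseries => [i _ _|n _]; first exact: sqr_ge0.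
    rewrite lee_fin; have [_ _ h0 _] := hN n.
    have := hP n 0 (y n); rewrite linear0 !h0 => h.
    by rewrite ler_sqr ?nnegrE.
  split => //.
  apply: ge_sup.
    by exists `|Lambda_eval (fun _ => 0) (fun _ _ => 0) (fun _ => 0) (PX x) (fun k => PY k (y k))|;
     exists (fun _ => 0), (fun _ _ => 0), (fun _ => 0); split => //; exact: zeroL.
  move=> _ [xs [ys [alpha [hL ->]]]].
  apply: (sup_upper_bound (@sigma_has_sup R X Y N hN x y hy)).
  exists (fun x => xs (PX x)), (fun k y => ys k (PY k y)), alpha; split => //.
  exact: (comp setT (fun _ => setT)).
move=> x y [x0 _ ex] hy hsq.
have ePX : PX x = x by rewrite -ex PXi.
have eY : forall k, PY k (y k) = y k.
  by move=> k; have [y0 _ ey] := hy k; rewrite -ey PYi.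
rewrite /sigma_norm; congr sup; apply/seteqP; split.
- move=> _ [xs [ys [alpha [hL ->]]]].
  exists (fun x => xs (PX x)), (fun k y => ys k (PY k y)), alpha; split.
    apply: (comp (range PX) (fun k => range (PY k)) _ _ _ _ _ hL).
      by move=> u; exists u.
    by move=> k u; exists u.
  rewrite /Lambda_eval /= ePX; congr (`|_ + limn (series _)|).
  by apply: funext => k; rewrite eY.
- move=> _ [xs [ys [alpha [[lx ly hb ha hs] ->]]]].
  exists xs, ys, alpha; split => //; split => //.
  + by move=> a u v _ _; exact: lx.
  + by move=> k a u v _ _; exact: ly.
  + by move=> k u v _ _; exact: hb.
Qed.
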